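(* Suppose the Oracle Mechanism with a polynomial-time $\gamma$-approximation oracle ($0<\gamma\le 1$), as described in the context, is run with the reduced budget $\gamma B$ in place of $B$. Then there is a function $\varepsilon(\theta)\ge0$ depending only on $\theta$ with $\varepsilon(\theta)\to0$ as $\theta\to0$ such that on every instance with largeness ratio $\theta$, the total payment is at most $(1+\varepsilon(\theta))B$ and the utility of the winning set is at least $(\gamma^2/2-\varepsilon(\theta))F^\star$, where $F^\star$ is the optimum for the original budget $B$.
   Context: Sellers $S=\{1,\dots,n\}$ each own one indivisible item and have a cost $c_i\ge0$. The buyer's utility is a monotone submodular $F:2^S\to\mathbb R_{\ge0}$, budget $B>0$. $c(T)=\sum_{i\in T}c_i$. For a budget $b$, $F^\star_b=\max\{F(T):c(T)\le b\}$; $F^\star=F^\star_B>0$; the largeness ratio is $\theta=\max_sF(\{s\})/F^\star$. Greedy sequence $\chi(F)=\langle x_1,\dots,x_n\rangle$: with $\chi_0=\emptyset$, $\chi_i=\{x_1,\dots,x_i\}$, $x_i$ maximizes $(F(\chi_{i-1}\cup\{s\})-F(\chi_{i-1}))/c_s$ over $s\notin\chi_{i-1}$ (ratio $+\infty$ if $c_s=0$; ties arbitrary); $\partial_i=F(\chi_i)-F(\chi_{i-1})$. A $\gamma$-approximation oracle, given an instance with known costs and a budget $b$, returns in polynomial time a set $T$ with $c(T)\le b$ and $F(T)\ge\gamma F^\star_b$. The mechanism with budget $b$: $\hat F$ = utility of the oracle's solution (budget $b$); for each seller $s$, $\hat F_s$ = utility of the oracle's solution with $s$ removed, $r_s=b/\hat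 F_s$; take the largest $k$ with $F(\chi_k)\le\hat F/2$; winners $\chi_k$; winner $x_j$ is paid $2r_{x_j}\partial_j$. Here $b=\gamma B$. *)

(* Defs.v *)
From HB Require Import structures.
From mathcomp Require Import all_boot all_order all_algebra.
From mathcomp Require Import reals constructive_ereal.
Set Implicit Arguments. Unset Strict Implicit. Unset Printing Implicit Defensive.
Import Order.TTheory GRing.Theory Num.Theory.
Local Open Scope ring_scope.

Section Defs.
Variable R : realType.

Definition monotone_fn n (F : {set 'I_n} -> R) :=
  forall A B : {set 'I_n}, A \subset B -> F A <= F B.

Definition submodular_fn n (F : {set 'I_n} -> R) :=
  forall (A B : {set 'I_n}) (s : 'I_n), A \subset B -> s \notin B ->
    F (s |: B) - F B <= F (s |: A) - F A.

Definition nonneg_fn n (F : {set 'I_n} -> R) := forall A, 0 <= F A.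

Definition cost n (c : 'I_n -> R) (T : {set 'I_n}) : R := \sum_(i in T) c i.

(* Optimum with budget b among sets of available sellers A:
   max { F T : T \subset A, c(T) <= b }.  (Seeded with 0, which is harmless
   since F >= 0 and the empty set is feasible whenever c >= 0 and b >= 0.) *)
Definition opt n (F : {set 'I_n} -> R) (c : 'I_n -> R) (A : {set 'I_n}) (b : R) : R :=
  \big[Num.max/0]_(T : {set 'I_n} | (T \subset A) && (cost c T <= b)) F T.

Definition Fstar n F c b := @opt n F c setT b.

Definition largeness n (F : {set 'I_n} -> R) (c : 'I_n -> R) (B : R) : R :=
  (\big[Num.max/0]_(s : 'I_n) F [set s]) / Fstar F c B.

Definition valid_instance n (F : {set 'I_n} -> R) (c : 'I_n -> R) :=
  [/\ nonneg_fn F, monotone_fn F, submodular_fn F & forall i, 0 <= c i].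

(* An oracle takes an instance (n sellers, utility F, costs c), the set A of
   sellers present (the instance "with s removed" is A = [set~ s]) and a budget
   b, and returns a set of sellers. *)
Definition oracle_type :=
  forall n : nat, ({set 'I_n} -> R) -> ('I_n -> R) -> {set 'I_n} -> R -> {set 'I_n}.

Definition approx_oracle (gamma : R) (O : oracle_type) :=
  forall n (F : {set 'I_n} -> R) (c : 'I_n -> R) (A : {set 'I_n}) (b : R),
    valid_instance F c -> 0 < b ->
    [/\ O n F c A b \subset A, cost c (O n F c A b) <= b &
        gamma * opt F c A b <= F (O n F c A b)].

Definition ratio (d cs : R) : \bar R :=
  if cs == 0 then +oo%E else (d / cs)%:E.

(* chi_i = {x_1, ..., x_i}  (with x 0-indexed: {x 0, ..., x (i-1)}) *)
Definition chi n (x : 'I_n -> 'I_n) (i : nat) : {set 'I_n} :=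
  [set x j | j : 'I_n & (j < i)%N].

Definition greedy_seq n (F : {set 'I_n} -> R) (c : 'I_n -> R) (x : 'I_n -> 'I_n) :=
  injective x /\
  forall (i : 'I_n) (s : 'I_n), s \notin chi x i ->
    (ratio (F (s |: chi x i) - F (chi x i)) (c s)
      <= ratio (F (x i |: chi x i) - F (chi x i)) (c (x i)))%E.

Definition partial n (F : {set 'I_n} -> R) (x : 'I_n -> 'I_n) (j : nat) : R :=
  F (chi x j.+1) - F (chi x j).

Definition Fhat (O : oracle_type) n F c (b : R) : R := F (O n F c setT b).
Definition Fhat_s (O : oracle_type) n F c (b : R) (s : 'I_n) : R :=
  F (O n F c [set~ s] b).
Definition rate (O : oracle_type) n F c (b : R) (s : 'I_n) : R :=
  b / Fhat_s O F c b s.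

Definition winner_count (O : oracle_type) n F c (b : R) (x : 'I_n -> 'I_n) (k : nat) :=
  [/\ (k <= n)%N, F (chi x k) <= Fhat O F c b / 2 &
      forall k' : nat, (k' <= n)%N -> F (chi x k') <= Fhat O F c b / 2 -> (k' <= k)%N].

Definition total_payment (O : oracle_type) n F c (b : R) (x : 'I_n -> 'I_n) (k : nat) : R :=
  \sum_(j < n | (j < k)%N) 2 * rate O F c b (x j) * partial F x j.

End Defs.

(* Main.v *)
Require Import Defs.
From HB Require Import structures.
From mathcomp Require Import all_boot all_order all_algebra.
From mathcomp Require Import reals constructive_ereal.
From mathcomp.algebra_tactics Require Import ring lra.
Import Order.TTheory GRing.Theory Num.Theory.
Local Open Scope ring_scope.

Section H.
Variable R : realType.

Lemma bigmax_ge (I : eqType) (r : seq I) (P : pred I) (f : I -> R) i :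
  i \in r -> P i -> f i <= \big[Num.max/0]_(j <- r | P j) f j.
Proof.
elim: r => [|a r IH] //=; rewrite in_cons big_cons; case/orP => [/eqP->|Hr] HP.
  by rewrite HP le_max lexx.
by case: (P a); rewrite ?le_max IH ?orbT.
Qed.

Lemma bigmax_att (I : Type) (r : seq I) (P : pred I) (f : I -> R) :
  0 < \big[Num.max/0]_(j <- r | P j) f j ->
  exists i, P i /\ f i = \big[Num.max/0]_(j <- r | P j) f j.
Proof.
pose K (x : R) := x = 0 \/ exists i, P i /\ f i = x.
have : K (\big[Num.max/0]_(j <- r | P j) f j).
  apply: big_ind; first by left.
    by move=> a b Ha Hb; rewrite /K; case: (leP a b).
  by move=> i Pi; right; exists i.
by case => [->|//]; rewrite ltxx.
Qed.

Lemma bigmax_nn (I : Type) (r : seq I) (P : pred I) (f : I -> R) :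
  (forall i, 0 <= f i) -> 0 <= \big[Num.max/0]_(j <- r | P j) f j.
Proof.
move=> H; apply: (big_ind (fun x => 0 <= x)) => //.
by move=> a b Ha Hb; rewrite le_max Ha.
Qed.

Variable n : nat.
Variable F : {set 'I_n} -> R.
Hypothesis F0 : nonneg_fn F.
Hypothesis Fm : monotone_fn F.
Hypothesis Fs : submodular_fn F.

Lemma sub_single A s : F (s |: A) <= F A + F [set s].
Proof.
case: (boolP (s \in A)) => H.
  have -> : s |: A = A by apply/setUidPr; rewrite sub1set.
  by rewrite lerDl F0.
have := Fs set0 A s (sub0set A) H.
rewrite setU0; have := F0 set0; lra.
Qed.

Definition pre (U : {set 'I_n}) (m : nat) := [set j in U | (j < m)%N].

Lemma tele U : F U - F set0 = \sum_(i in U) (F (i |: pre U i) - F (pre U i)).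
Proof.
suff H : forall m, (m <= n)%N ->
   F (pre U m) - F set0 = \sum_(i in U | (i < m)%N) (F (i |: pre U i) - F (pre U i)).
  have := H n (leqnn n).
  have -> : pre U n = U by apply/setP => j; rewrite inE ltn_ord andbT.
  move->; apply: eq_bigl => j; by rewrite ltn_ord andbT.
elim => [|m IH] Hm.
  have -> : pre U 0 = set0 by apply/setP => j; rewrite !inE ltn0 andbF.
  by rewrite subrr big_pred0 // => j; rewrite ltn0 andbF.
set om := Ordinal Hm.
have IH' := IH (ltnW Hm).
case: (boolP (om \in U)) => HU.
  have -> : pre U m.+1 = om |: pre U m.
    apply/setP => j; rewrite !inE ltnS leq_eqVlt.
    case: (eqVneq j om) => [->|Hne] /=; first by rewrite HU eqxx.
    have -> : (nat_of_ord j == m) = false.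
      by apply/negbTE; apply: contra Hne => /eqP E; apply/eqP/val_inj.
    by [].
  rewrite (bigD1 om) /=; last by rewrite HU ltnSn.
  rewrite (eq_bigl (fun i => (i \in U) && (i < m)%N)); last first.
    move=> j /=; rewrite ltnS leq_eqVlt.
    case: (eqVneq j om) => [->|Hne] /=; first by rewrite ltnn !andbF.
    have -> : (nat_of_ord j == m) = false.
      by apply/negbTE; apply: contra Hne => /eqP E; apply/eqP/val_inj.
    by rewrite andbT.
  rewrite -IH'; ring.
have -> : pre U m.+1 = pre U m.
  apply/setP => j; rewrite !inE ltnS leq_eqVlt.
  case: (eqVneq j om) => [->|Hne] /=; first by rewrite (negbTE HU).
  have -> : (nat_of_ord j == m) = false.
    by apply/negbTE; apply: contra Hne => /eqP E; apply/eqP/val_inj.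
  by [].
rewrite IH'; apply: eq_bigl => j; symmetry; rewrite ltnS leq_eqVlt.
case: (eqVneq j om) => [->|Hne] /=; first by rewrite (negbTE HU).
have -> : (nat_of_ord j == m) = false.
  by apply/negbTE; apply: contra Hne => /eqP E; apply/eqP/val_inj.
by [].
Qed.

Lemma marg_sub (S T : {set 'I_n}) : S \subset T ->
  \sum_(i in S) (F (i |: pre T i) - F (pre T i)) <= F S - F set0.
Proof.
move=> HST; rewrite tele; apply: ler_sum => i Si; apply: Fs.
  by apply/subsetP => j; rewrite !inE => /andP[/(subsetP HST) -> ->].
by rewrite inE ltnn andbF.
Qed.

Lemma knap (g c : 'I_n -> R) (M : R) :
  (forall i, 0 <= g i) -> (forall i, 0 <= c i) -> 0 <= M ->
  forall (I : {set 'I_n}) lam, (forall i, i \in I -> g i <= M) -> 0 <= lam <= 1 ->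
  exists S : {set 'I_n}, [/\ S \subset I, \sum_(i in S) c i <= lam * \sum_(i in I) c i &
                 lam * \sum_(i in I) g i - M <= \sum_(i in S) g i].
Proof.
move=> g0 c0 M0 I.
elim: {I}#|I| {-2}I (leqnn #|I|) => [|m IH] I HI lam HM /andP[l0 l1].
  have -> : I = set0 by apply/eqP; rewrite -cards_eq0 -leqn0.
  exists set0; rewrite !big_set0 sub0set mulr0; split => //; lra.
case: (set_0Vmem I) => [->| [i0 Hi0]].
  exists set0; rewrite !big_set0 sub0set mulr0; split => //; lra.
set C := \sum_(i in I) c i; set G := \sum_(i in I) g i.
have [i Ii Hi] : exists2 i, i \in I & g i * C <= G * c i.
  case: (boolP [exists i in I, g i * C <= G * c i]) => [/exists_inP[i Ii Hi]|Hn].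
    by exists i.
  exfalso.
  have Hlt : forall i, i \in I -> G * c i < g i * C.
    move=> i Ii; rewrite ltNge; move/exists_inPn: Hn; exact.
  have : 0 < \sum_(i in I) (g i * C - G * c i).
    rewrite (bigD1 i0) //=.
    have := Hlt i0 Hi0.
    have : 0 <= \sum_(i in I | i != i0) (g i * C - G * c i).
      by apply: sumr_ge0 => j /andP[Ij _]; have := Hlt j Ij; lra.
    lra.
  by rewrite sumrB -mulr_suml -mulr_sumr -/G -/C mulrC subrr ltxx.
set I' := I :\ i.
have HC : C = c i + \sum_(j in I') c j.
  rewrite /C (bigD1 i) //=; congr (_ + _); apply: eq_bigl => j.
  by rewrite !inE andbC.
have HG : G = g i + \sum_(j in I') g j.
  rewrite /G (bigD1 i) //=; congr (_ + _); apply: eq_bigl => j.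
  by rewrite !inE andbC.
have HI' : (#|I'| <= m)%N.
  by move: HI; rewrite (cardsD1 i I) Ii.
set C' := \sum_(j in I') c j; set G' := \sum_(j in I') g j.
move: HC HG; rewrite -/C' -/G' => HC HG.
have HM' : forall j, j \in I' -> g j <= M.
  by move=> j; rewrite inE => /andP[_ /HM].
have gi := HM i Ii.
have G0 : 0 <= G' by apply: sumr_ge0.
have C0 : 0 <= C' by apply: sumr_ge0.
have ci0 := c0 i; have gi0 := g0 i.
case: (lerP C' (lam * C)) => Hc.
  exists I'; rewrite -/G' -/C' -/G -/C; split => //; first by apply: subD1set.
  have : lam * G <= G by rewrite ler_piMl // HG addr_ge0.
  lra.
have C'p : 0 < C' by have := mulr_ge0 l0 (addr_ge0 ci0 C0); rewrite -HC; lra.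
set lam' := lam * C / C'.
have Hl' : lam' * C' = lam * C by rewrite /lam' divfK // gt_eqF.
have l'0 : 0 <= lam' by rewrite /lam' divr_ge0 // ?mulr_ge0 // HC addr_ge0.
have l'1 : lam' <= 1 by rewrite /lam' ler_pdivrMr // mul1r ltW.
have [S [HS1 HS2 HS3]] := IH I' HI' lam' HM' (introT andP (conj l'0 l'1)).
exists S; split.
- exact: subset_trans HS1 (subD1set _ _).
- by move: HS2; rewrite -/C' Hl'.
move: HS3; rewrite -/G' -/G => HS3.
have : lam * G <= lam' * G'.
  rewrite -(ler_pM2r C'p).
  have -> : lam' * G' * C' = lam * C * G' by rewrite -Hl'; ring.
  rewrite HC HG; rewrite HC HG in Hi; nra.
lra.
Qed.

End H.

Section M.
Variable R : realType.
Variable n : nat.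

Lemma cost_sub (c : 'I_n -> R) (A B : {set 'I_n}) : (forall i, 0 <= c i) ->
  A \subset B -> cost c A <= cost c B.
Proof.
move=> c0 HAB; rewrite /cost [X in _ <= X](big_setID A) /=.
have -> : B :&: A = A by apply/setIidPr.
by rewrite lerDl sumr_ge0.
Qed.

Variable x : 'I_n -> 'I_n.

Lemma chi_mono a b : (a <= b)%N -> chi x a \subset chi x b.
Proof.
move=> Hab; apply/subsetP => s /imsetP[j]; rewrite inE => Hj ->.
by apply/imsetP; exists j => //; rewrite inE (leq_trans Hj Hab).
Qed.

Lemma chi0 : chi x 0 = set0.
Proof. by apply/setP => s; rewrite inE; apply/imsetP => -[j]; rewrite inE ltn0. Qed.

Lemma chiS (j : 'I_n) : chi x j.+1 = x j |: chi x j.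
Proof.
apply/setP => s; rewrite in_setU1.
apply/imsetP/idP.
  move=> [i]; rewrite inE ltnS leq_eqVlt => /orP[/eqP E|Hi] ->.
    by rewrite (val_inj E) eqxx.
  by apply/orP; right; apply/imsetP; exists i; rewrite ?inE.
case/orP => [/eqP ->|/imsetP[i]]; first by exists j; rewrite ?inE.
by rewrite inE => Hi ->; exists i; rewrite // inE ltnS ltnW.
Qed.

Lemma chi_mem (j : 'I_n) k : (j < k)%N -> x j \in chi x k.
Proof. by move=> H; apply/imsetP; exists j; rewrite ?inE. Qed.

Lemma chi_n : injective x -> chi x n = setT.
Proof.
move=> Hinj; apply/setP => s; rewrite inE.
have [y xy yx] := injF_bij Hinj.
by apply/imsetP; exists (y s); rewrite ?inE ?ltn_ord ?yx.
Qed.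

End M.

Theorem corollary2 (R : realType) (gamma : R) (O : oracle_type R) :
  0 < gamma <= 1 ->
  approx_oracle gamma O ->
  exists eps : R -> R,
    (forall t, 0 <= eps t) /\
    (forall e : R, 0 < e -> exists d : R, 0 < d /\
        forall t : R, 0 < t < d -> eps t < e) /\
    forall (n : nat) (F : {set 'I_n} -> R) (c : 'I_n -> R) (B : R)
           (x : 'I_n -> 'I_n) (k : nat),
      valid_instance F c -> 0 < B -> 0 < Fstar F c B ->
      greedy_seq F c x ->
      winner_count O F c (gamma * B) x k ->
      let theta := largeness F c B in
      total_payment O F c (gamma * B) x k <= (1 + eps theta) * B /\
      (gamma ^+ 2 / 2 - eps theta) * Fstar F c B <= F (chi x k).
Proof.
move=> /andP[g0 g1] Happ.
have g2p : 0 < gamma ^+ 2 by rewrite exprn_gt0.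
set u := 2 / gamma ^+ 2.
have u0 : 0 <= u by rewrite divr_ge0 // ltW.
have Hu : u * gamma ^+ 2 = 2 by rewrite /u divfK // gt_eqF.
set K := u + 2.
have Kp : 0 < K by rewrite /K; lra.
exists (fun t => if (0 <= t) && (t < gamma ^+ 2 / 4) then K * t else 1).
split; [|split].
- move=> t; case: ifP => [/andP[t0 _]|_]; [by rewrite mulr_ge0 // ltW | exact: ler01].
- move=> e e0; exists (Num.min (gamma ^+ 2 / 4) (e / (2 * K))); split.
    by rewrite lt_min; apply/andP; split; rewrite divr_gt0 // mulr_gt0.
  move=> t /andP[t0]; rewrite lt_min => /andP[t1 t2]; rewrite ltW // t1 /=.
  have : t * (2 * K) < e by rewrite -ltr_pdivlMr // mulr_gt0.
  have : 0 <= K * t by rewrite mulr_ge0 // ltW.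
  lra.
move=> nn F c B x k [F0 Fm Fs c0] HB HFs [Hinj _] [Hkn Hk Hkmax] theta.
have Hv : valid_instance F c by split.
set b := gamma * B.
have bp : 0 < b by rewrite mulr_gt0.
set Fst := Fstar F c B.
set Mx := \big[Num.max/0]_(s : 'I_nn) F [set s].
have HMx : forall s, F [set s] <= Mx.
  by move=> s; apply: bigmax_ge => //; rewrite mem_index_enum.
have Mx0 : 0 <= Mx by apply: bigmax_nn.
have HMt : Mx = theta * Fst by rewrite /theta /largeness -/Mx -/Fst divfK // gt_eqF.
have th0 : 0 <= theta by rewrite /theta /largeness divr_ge0 // ltW.
have [T [HcT HFT]] : exists T, cost c T <= B /\ F T = Fst.
  by move: HFs; rewrite /Fst /Fstar /opt => /bigmax_att [T [/andP[_ H1] H2]]; exists T.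
have gnn : forall i : 'I_nn, 0 <= F (i |: pre nn T i) - F (pre nn T i).
  by move=> i; rewrite subr_ge0; apply: Fm; apply: subsetUr.
have gM : forall i : 'I_nn, i \in T -> F (i |: pre nn T i) - F (pre nn T i) <= Mx.
  move=> i _; have := Fs set0 (pre nn T i) i (sub0set _).
  rewrite inE ltnn andbF setU0 => /(_ isT).
  have := F0 set0; have := HMx i; lra.
have [S [HST HcS HgS]] := @knap R nn (fun i => F (i |: pre nn T i) - F (pre nn T i)) c Mx
   gnn c0 Mx0 T gamma gM (introT andP (conj (ltW g0) g1)).
move: HgS; rewrite -tele => HgS.
have HS1 := @marg_sub R nn F Fs S T HST.
have FS : gamma * Fst - Mx <= F S.
  have : gamma * F set0 <= F set0 by rewrite ler_piMl.
  move: HgS HS1; rewrite HFT; lra.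
have HcS' : cost c S <= b.
  apply: (le_trans HcS); apply: ler_wpM2l => //; exact: ltW.
have HQ : F S <= opt F c setT b.
  by apply: bigmax_ge; rewrite ?mem_index_enum // subsetT HcS'.
have [HO1 HO2 HO3] := Happ nn F c setT b Hv bp.
set O0 := O nn F c setT b.
set Fh := Fhat O F c b.
have FhE : Fh = F O0 by [].
have HFh : gamma * (gamma * Fst - Mx) <= Fh.
  rewrite FhE; apply: le_trans HO3; apply: ler_wpM2l; [exact: ltW | exact: le_trans FS HQ].
have Fh0 : 0 <= Fh by rewrite FhE.
have HFss : forall s, gamma * (Fh - F [set s]) <= Fhat_s O F c b s.
  move=> s; have [_ _ H3] := Happ nn F c [set~ s] b Hv bp.
  have H4 : F (O0 :\ s) <= opt F c [set~ s] b.
    apply: bigmax_ge; rewrite ?mem_index_enum //; apply/andP; split.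
      by apply/subsetP => j; rewrite !inE => /andP[-> _].
    apply: le_trans HO2; apply: cost_sub => //; exact: subD1set.
  have H5 : F O0 <= F (O0 :\ s) + F [set s].
    apply: le_trans (@sub_single R nn F F0 Fs (O0 :\ s) s); apply: Fm.
    by apply/subsetP => j Hj; rewrite in_setU1 in_setD1 Hj andbT orbN.
  apply: le_trans H3; apply: ler_wpM2l; first exact: ltW.
  apply: le_trans H4; rewrite FhE; lra.
have Hwin : forall j : 'I_nn, (j < k)%N -> F [set x j] <= F (chi x k).
  by move=> j Hj; apply: Fm; rewrite sub1set chi_mem.
have Hut : Fh / 2 - Mx <= F (chi x k).
  case: (ltnP k nn) => Hkn'.
    have Hgt : Fh / 2 < F (chi x k.+1).
      rewrite ltNge; apply/negP => H; have := Hkmax _ Hkn' H; by rewrite ltnn.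
    have := @chiS nn x (Ordinal Hkn'); rewrite /= => E.
    move: Hgt; rewrite E => Hgt.
    have := @sub_single R nn F F0 Fs (chi x k) (x (Ordinal Hkn')).
    have := HMx (x (Ordinal Hkn')); lra.
  have -> : k = nn by apply/eqP; rewrite eqn_leq Hkn Hkn'.
  rewrite chi_n //; have : F O0 <= F setT by apply: Fm; apply: subsetT.
  rewrite -FhE; lra.
have Hsum : \sum_(j < nn | (j < k)%N) partial F x j = F (chi x k) - F set0.
  rewrite -(big_ord_widen nn (fun j => partial F x j) Hkn) -(big_mkord xpredT).
  by rewrite /partial telescope_sumr // chi0.
have Hpnn : forall j, 0 <= partial F x j.
  by move=> j; rewrite /partial subr_ge0; apply: Fm; apply: chi_mono.
have Hpay : forall L, 0 < L ->
    (forall j : 'I_nn, (j < k)%N -> gamma * L <= Fhat_s O F c b (x j)) ->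
    total_payment O F c b x k <= 2 * (B / L) * F (chi x k).
  move=> L Lp HL; rewrite /total_payment.
  apply: (@le_trans _ _ (\sum_(j < nn | (j < k)%N) 2 * (B / L) * partial F x j)).
    apply: ler_sum => j Hj; apply: ler_wpM2r => //; apply: ler_wpM2l => //.
    have Fsp : 0 < Fhat_s O F c b (x j).
      by apply: lt_le_trans (HL j Hj); rewrite mulr_gt0.
    rewrite /rate ler_pdivrMr //.
    apply: (@le_trans _ _ (B / L * (gamma * L))).
      by rewrite /b le_eqVlt; apply/orP; left; apply/eqP; field; rewrite gt_eqF.
    by apply: ler_wpM2l; [rewrite divr_ge0 // ltW | exact: HL].
  rewrite -mulr_sumr Hsum; apply: ler_wpM2l.
    by rewrite mulr_ge0 // divr_ge0 // ltW.
  have := F0 set0; lra.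
have Hchk : F (chi x k) <= Fh / 2 by [].
have Fck0 := F0 (chi x k).
case: ifP => [/andP[t0 tsm] | _].
  have H4 : theta * 4 < gamma ^+ 2 by rewrite -ltr_pdivlMr.
  have Fstp : 0 < Fst by [].
  have HMs : Mx * 4 < gamma ^+ 2 * Fst.
    have H4' : 0 < gamma ^+ 2 - theta * 4 by rewrite subr_gt0.
    by rewrite HMt; have := mulr_gt0 H4' Fstp; lra.
  have gMx : gamma * Mx <= Mx by rewrite ler_piMl.
  set L2 := Fh - Mx.
  have HL2 : gamma ^+ 2 * Fst <= 2 * L2 by rewrite /L2; lra.
  have L2p : 0 < L2 by have := mulr_gt0 g2p HFs; lra.
  have HMK : Mx <= K * theta * L2.
    have E : u * theta * (gamma ^+ 2 * Fst) = 2 * Mx by rewrite HMt -[in RHS]Hu; ring.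
    have : u * theta * (gamma ^+ 2 * Fst) <= u * theta * (2 * L2).
      exact: (ler_wpM2l (mulr_ge0 u0 th0) HL2).
    have : 0 <= theta * L2 by rewrite mulr_ge0 // ltW.
    rewrite /K; lra.
  split.
    have Hw : forall j : 'I_nn, (j < k)%N -> gamma * L2 <= Fhat_s O F c b (x j).
      move=> j Hj; apply: le_trans (HFss (x j)); apply: ler_wpM2l; first exact: ltW.
      rewrite /L2; have := HMx (x j); lra.
    apply: le_trans (Hpay L2 L2p Hw) _.
    apply: (@le_trans _ _ (2 * (B / L2) * (Fh / 2))).
      by apply: ler_wpM2l => //; rewrite mulr_ge0 // divr_ge0 // ltW.
    have E2 : 2 * (B / L2) * (Fh / 2) = (B / L2) * Fh.
      by field; rewrite gt_eqF.
    rewrite E2; apply: (@le_trans _ _ (B / L2 * ((1 + K * theta) * L2))).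
      apply: ler_wpM2l; first by rewrite divr_ge0 // ltW.
      rewrite /L2 in HMK *; lra.
    by rewrite le_eqVlt; apply/orP; left; apply/eqP; field; rewrite gt_eqF.
  have E3 : K * theta * Fst = u * Mx + 2 * Mx by rewrite HMt /K; ring.
  have : 0 <= u * Mx by rewrite mulr_ge0.
  lra.
split.
  case: (ltP 0 Fh) => Fhp.
    have Hw : forall j : 'I_nn, (j < k)%N -> gamma * (Fh / 2) <= Fhat_s O F c b (x j).
      move=> j Hj; apply: le_trans (HFss (x j)); apply: ler_wpM2l; first exact: ltW.
      have := Hwin j Hj; lra.
    have Fh2 : 0 < Fh / 2 by rewrite divr_gt0.
    apply: le_trans (Hpay (Fh / 2) Fh2 Hw) _.
    apply: (@le_trans _ _ (2 * (B / (Fh / 2)) * (Fh / 2))).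
      by apply: ler_wpM2l => //; rewrite mulr_ge0 // divr_ge0 // ltW.
    have -> : 2 * (B / (Fh / 2)) * (Fh / 2) = 2 * B.
      by field; rewrite gt_eqF.
    lra.
  apply: (@le_trans _ _ 0); last by rewrite mulr_ge0 // ltW // addr_gt0.
  rewrite /total_payment; apply: sumr_le0 => j Hj.
  apply: mulr_ge0_le0.
    by apply: mulr_ge0 => //; rewrite /rate divr_ge0 // ?(ltW bp) //; apply: F0.
  rewrite /partial; have := F0 (chi x j).
  have : F (chi x j.+1) <= F (chi x k) by apply: Fm; apply: chi_mono.
  lra.
have Fstp : 0 < Fst by [].
have : gamma ^+ 2 <= 1 by nra.
nra.
Qed.
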